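(* Let $\lambda$ be a partition, $n\ge\ell(\lambda)$, and $M\in\mathrm{MLQ}(\lambda,n)$. Then $\operatorname{maj}(M)=\operatorname{charge}(\mathrm{cw}(M))$.
   Context: For a partition $\lambda$, $\lambda'$ is the conjugate partition. For $L=\lambda_1$ and $n\ge\ell(\lambda)$, $\mathrm{MLQ}(\lambda,n)$ is the set of tuples $M=(B_1,\dots,B_L)$ of subsets of $[n]$ with $|B_j|=\lambda'_j$, drawn as an $L\times n$ grid with rows $1..L$ bottom to top, columns $1..n$ left to right, a ball in cell $(r,j)$ iff $j\in B_r$. The column word $\mathrm{cw}(M)$ scans columns left to right and, within each column, top to bottom, recording the row number of each ball (so it has content $\lambda'$). Major index (Ferrari–Martin labelling). For $r=L,\dots,2$: every unlabelled ball of row $r$ gets label $r$; then the balls of row $r$, in decreasing label order (left to right among equal labels), are each paired with the first unlabelled ball of row $r-1$ weakly to the right, scanning cyclically ($j,j+1,\dots,n,1,\dots$); that ball gets the same label; the pairing wraps if the lower ball is in a column strictly left of the upper ball. Unlabelled balls in row 1 get label 1. $\operatorname{maj}(M)=\sum(\ell(p)-r(p)+1)$ over wrapping pairings $p$, $r(p)$ the row of the upper ball, $\ell(p)$ its label. Charge. For a permutation $\tau$ of $[m]$ in one-line notation, $\operatorname{charge}(\tau)=\sum(m-i)$ over $i\in[m-1]$ such that $i$ is to the left of $i+1$. For a word $w$ with letters $1,\dots,k$ whose multiplicities are weakly decreasing ($\#1\ge\#2\ge\cdots$), extract the first charge subword by locating the leftmost occurrence of $k$, then the next occurrence of $k-1$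 to its right cyclically (wrapping to the beginning if needed), then of $k-2$, …, down to $1$; these letters in positional order form a permutation $w^{(1)}$ of $[k]$. Remove them and repeat with the remaining letters to obtain $w^{(2)},\dots$. Then $\operatorname{charge}(w)=\sum_i\operatorname{charge}(w^{(i)})$. *)

(* Defs.v *)
From mathcomp Require Import all_boot.
Set Implicit Arguments. Unset Strict Implicit. Unset Printing Implicit Defensive.

Definition is_partition (lam : seq nat) : bool :=
  sorted geq lam && all (fun x => 0 < x) lam.

Definition conj_part (lam : seq nat) : seq nat :=
  [seq count (fun x => j <= x) lam | j <- iota 1 (head 0 lam)].

(* M : seq {set 'I_n}; row r (1 <= r <= size M) is nth set0 M r.-1,
   columns 1..n are represented by 'I_n (0-based). *)
Definition ball n (M : seq {set 'I_n}) (r : nat) (j : 'I_n) : bool :=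
  j \in nth set0 M r.-1.

Definition in_MLQ (lam : seq nat) n (M : seq {set 'I_n}) : bool :=
  (size M == head 0 lam) &&
  all2 (fun (B : {set 'I_n}) c => #|B| == c) M (conj_part lam).

(* Column word: columns left to right, in each column top to bottom. *)
Definition cw n (M : seq {set 'I_n}) : seq nat :=
  flatten [seq [seq r <- rev (iota 1 (size M)) | ball M r j] | j <- enum 'I_n].

Definition cols n (M : seq {set 'I_n}) (r : nat) : seq nat :=
  map val (filter (ball M r) (enum 'I_n)).

(* One step at row r: [lab c] is the label already given to the ball of
   row r in column c (0 = unlabelled).  Returns the labelling of row r-1
   produced by the pairings, and the contribution of the wrapping pairings. *)
Definition step n (M : seq {set 'I_n}) (r : nat) (lab : nat -> nat)
  : (nat -> nat) * nat :=
  let up := fun c => if lab c == 0 then r else lab c in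
  let order := sort (fun a b => (up b < up a) || ((up a == up b) && (a <= b)))
                    (cols M r) in
  foldl (fun (st : (nat -> nat) * nat) c =>
           let low := st.1 in
           let cand := [seq d <- cols M r.-1 | low d == 0] in
           match cand with
           | [::] => st
           | d0 :: _ =>
             let d := head d0 [seq d <- cand | c <= d] in
             ((fun x => if x == d then up c else low x),
              st.2 + (if d < c then up c - r + 1 else 0))
           end)
        ((fun _ => 0), 0) order.

Fixpoint majrec n (M : seq {set 'I_n}) (r : nat) (lab : nat -> nat) : nat :=
  match r with
  | S ((S _) as r0) => let p := step M r lab in p.2 + majrec M r0 p.1
  | _ => 0
  end.

Definition maj n (M : seq {set 'I_n}) : nat := majrec M (size M) (fun _ => 0).

Definition charge_perm (t : seq nat) : nat :=
  let m := size t in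
  \sum_(1 <= i < m) (if index i t < index i.+1 t then m - i else 0).

Definition maxletter (w : seq nat) : nat := foldr maxn 0 w.

Definition next_occ (w : seq nat) (l p : nat) : nat :=
  let qs := [seq q <- iota 0 (size w) | nth 0 w q == l] in
  match [seq q <- qs | p < q] with
  | q :: _ => q
  | [::] => head (size w) qs
  end.

Fixpoint chain (w : seq nat) (l p : nat) : seq nat :=
  match l with
  | 0 => [::]
  | l'.+1 => let q := next_occ w l p in q :: chain w l' q
  end.

Definition first_positions (w : seq nat) : seq nat :=
  let k := maxletter w in
  if k is 0 then [::] else let p := index k w in p :: chain w k.-1 p.

Definition charge_subword (w : seq nat) : seq nat :=
  [seq nth 0 w q | q <- [seq q <- iota 0 (size w) | q \in first_positions w]].

Definition charge_rest (w : seq nat) : seq nat :=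
  [seq nth 0 w q | q <- [seq q <- iota 0 (size w) | q \notin first_positions w]].

Fixpoint charge_aux (fuel : nat) (w : seq nat) : nat :=
  match fuel with
  | 0 => 0
  | f.+1 => if w is [::] then 0
            else charge_perm (charge_subword w) + charge_aux f (charge_rest w)
  end.

Definition charge (w : seq nat) : nat := charge_aux (size w) w.

(* Main.v *)
Require Import Defs.
From mathcomp Require Import all_boot.
From mathcomp Require Import zify.
Set Implicit Arguments. Unset Strict Implicit. Unset Printing Implicit Defensive.

Definition nf (s : seq nat) (c : nat) := head (head 0 s) [seq d <- s | c <= d].

Definition nfspec (s : seq nat) c z :=
  (c <= z /\ forall e, e \in s -> c <= e -> z <= e) \/
  (z < c /\ forall e, e \in s -> e < c /\ z <= e).

Lemma nf_in s c : s != [::] -> nf s c \in s.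
Proof.
rewrite /nf; case: s => [|d0 s] // _.
case E: [seq d <- d0 :: s | c <= d] => [|y t] /=.
  by rewrite mem_head.
have : y \in [seq d <- d0 :: s | c <= d] by rewrite E mem_head.
by rewrite mem_filter => /andP[].
Qed.

Lemma nf_prop s c : sorted leq s -> s != [::] -> nfspec s c (nf s c).
Proof.
rewrite /nf /nfspec; case: s => [|d0 s] // Hs _.
case E: [seq d <- d0 :: s | c <= d] => [|y t] /=.
  right.
  have Hl : forall e, e \in d0 :: s -> e < c.
    move=> e He; rewrite ltnNge; apply/negP => Hce.
    have : e \in [seq d <- d0 :: s | c <= d] by rewrite mem_filter Hce He.
    by rewrite E.
  split; first by apply: Hl; rewrite mem_head.
  move=> e He; split; first exact: Hl.
  move: He; rewrite inE => /orP[/eqP -> //|He].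
  have := order_path_min leq_trans Hs => /allP; apply; exact: He.
left.
have Hy : y \in [seq d <- d0 :: s | c <= d] by rewrite E mem_head.
move: (Hy); rewrite mem_filter => /andP[Hcy _]; split => // e He Hce.
have He' : e \in y :: t by rewrite -E mem_filter Hce He.
have Hst : sorted leq (y :: t) by rewrite -E; apply: sorted_filter => //; exact: leq_trans.
move: He'; rewrite inE => /orP[/eqP -> //|He'].
have := order_path_min leq_trans Hst => /allP; apply; exact: He'.
Qed.

Lemma nf_eq s c z : sorted leq s -> z \in s -> nfspec s c z -> nf s c = z.
Proof.
move=> Hs Hz Hsp.
have Hn : s != [::] by case: s Hz Hs Hsp.
have Hin := nf_in c Hn; have := nf_prop c Hs Hn.
rewrite /nfspec in Hsp *.
move: (nf s c) Hin => y Hy [[H1 H2]|[H1 H2]]; case: Hsp => [[H3 H4]|[H3 H4]].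
- have := H2 z Hz H3; have := H4 y Hy H1; lia.
- have := H4 y Hy; lia.
- have := H2 z Hz; lia.
- have := H2 z Hz; have := H4 y Hy; lia.
Qed.

Lemma nf_ext s c1 c2 : {in s, forall e, (c1 <= e) = (c2 <= e)} -> nf s c1 = nf s c2.
Proof. by move=> H; rewrite /nf (eq_in_filter H). Qed.

Lemma nf_all s c : {in s, forall e, c <= e} -> nf s c = head 0 s.
Proof.
move=> H; rewrite /nf (eq_in_filter (a2 := predT)); first by rewrite filter_predT; case: s {H}.
by move=> e /H ->.
Qed.

Lemma nf_none s c : {in s, forall e, e < c} -> nf s c = head 0 s.
Proof.
move=> H; rewrite /nf (eq_in_filter (a2 := pred0)); first by rewrite filter_pred0.
by move=> e /H; rewrite ltnNge => /negbTE ->.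
Qed.

Definition upd (f : nat -> nat) d u := fun x => if x == d then u else f x.

Definition gg (T : seq nat) (r : nat) (up : nat -> nat)
   (st : (nat -> nat) * nat) (c : nat) : (nat -> nat) * nat :=
  let low := st.1 in
  let cand := [seq d <- T | low d == 0] in
  match cand with
  | [::] => st
  | d0 :: _ =>
    let d := head d0 [seq d <- cand | c <= d] in
    ((fun x => if x == d then up c else low x),
     st.2 + (if d < c then up c - r + 1 else 0))
  end.

Definition cand (T : seq nat) (st : (nat -> nat) * nat) := [seq d <- T | st.1 d == 0].

Lemma gg_cons T r up st c : cand T st != [::] ->
  gg T r up st c = (upd st.1 (nf (cand T st) c) (up c),
                    st.2 + (if nf (cand T st) c < c then up c - r + 1 else 0)).
Proof. by rewrite /gg /cand /nf; case: [seq d <- T | st.1 d == 0]. Qed.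

Lemma gg_nil T r up st c : cand T st = [::] -> gg T r up st c = st.
Proof. by rewrite /gg /cand => ->. Qed.

Lemma cand_upd T f s2 d u : u != 0 ->
  cand T (upd f d u, s2) = [seq x <- cand T (f, s2) | x != d].
Proof.
move=> Hu; rewrite /cand -filter_predI; apply: eq_filter => x /=.
rewrite /upd; case: (eqVneq x d) => [->|Hne] /=.
  exact: negbTE Hu.
by [].
Qed.

Definition steq (a b : (nat -> nat) * nat) := a.1 =1 b.1 /\ a.2 = b.2.

Lemma steq_refl a : steq a a. Proof. by []. Qed.
Lemma steq_trans a b c : steq a b -> steq b c -> steq a c.
Proof. by move=> [H1 H2] [H3 H4]; split => [x|]; rewrite ?H1 ?H3 ?H2 ?H4. Qed.

Lemma cand_steq T a b : steq a b -> cand T a = cand T b.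
Proof. by move=> [H _]; rewrite /cand; apply: eq_filter => x; rewrite H. Qed.

Lemma gg_congr T r up a b c : steq a b -> steq (gg T r up a c) (gg T r up b c).
Proof.
move=> Hab; have E := cand_steq T Hab.
case Ea: (cand T a) => [|d0 t].
  by rewrite !gg_nil // -E.
rewrite !gg_cons -?E ?Ea //.
case: Hab => H1 H2; split => [x|] /=; last by rewrite H2.
by rewrite /upd H1.
Qed.

Lemma foldl_congr T r up s a b : steq a b ->
  steq (foldl (gg T r up) a s) (foldl (gg T r up) b s).
Proof.
elim: s a b => [|c s IH] a b Hab //=.
by apply: IH; apply: gg_congr.
Qed.

Lemma cand_sorted T st : sorted ltn T -> sorted leq (cand T st) /\ uniq (cand T st).
Proof.
move=> HT; have H := sorted_filter ltn_trans (fun d => st.1 d == 0) HT.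
by move: H; rewrite ltn_sorted_uniq_leq => /andP[].
Qed.

Lemma size_filter1 (s : seq nat) x : uniq s -> x \in s ->
  size [seq y <- s | y != x] = (size s).-1.
Proof.
move=> Hu Hx; rewrite -(size_rem Hx) rem_filter //.
Qed.

Lemma cand_gg T r up st c : sorted ltn T -> cand T st != [::] -> 0 < up c ->
  cand T (gg T r up st c) = [seq d <- cand T st | d != nf (cand T st) c] /\
  size (cand T (gg T r up st c)) = (size (cand T st)).-1.
Proof.
move=> HT Hn Hu; rewrite gg_cons //.
have -> : cand T (upd st.1 (nf (cand T st) c) (up c),
   st.2 + (if nf (cand T st) c < c then up c - r + 1 else 0)) =
   [seq d <- cand T st | d != nf (cand T st) c].
  rewrite cand_upd; last by rewrite -lt0n.
  by [].
split => //; apply: size_filter1; first by case: (cand_sorted st HT).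
exact: nf_in.
Qed.

Lemma upd_comm f x y u : upd (upd f x u) y u =1 upd (upd f y u) x u.
Proof. by move=> z; rewrite /upd; case: (z == x); case: (z == y). Qed.

Lemma nf_rem (F : seq nat) b x : sorted leq F -> F != [::] ->
  nf F b != x -> nf [seq d <- F | d != x] b = nf F b.
Proof.
move=> Hs Hn Hx; apply: nf_eq.
- by apply: sorted_filter => //; exact: leq_trans.
- by rewrite mem_filter Hx nf_in.
- have := nf_prop b Hs Hn; rewrite /nfspec => -[[H1 H2]|[H1 H2]].
  + by left; split => // e; rewrite mem_filter => /andP[_]; apply: H2.
  + by right; split => // e; rewrite mem_filter => /andP[_]; apply: H2.
Qed.

Lemma nf_rem_same (F : seq nat) a z : sorted leq F -> F != [::] -> nf F a = z ->
  nf [seq d <- F | d != z] a = nf [seq d <- F | d != z] z.+1.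
Proof.
move=> Hs Hn Hz; have := nf_prop a Hs Hn; rewrite Hz /nfspec => -[[H1 H2]|[H1 H2]].
- apply: nf_ext => e; rewrite mem_filter => /andP[Hez HeF].
  have := H2 e HeF; move: Hez => /eqP; lia.
- rewrite nf_none; last first.
    by move=> e; rewrite mem_filter => /andP[_ /H2 []].
  rewrite nf_all // => e; rewrite mem_filter => /andP[Hez /H2 [_]].
  move: Hez => /eqP; lia.
Qed.

Lemma gg_swap T r up st a b : sorted ltn T -> 1 < size (cand T st) ->
  up a = up b -> 0 < up a ->
  steq (gg T r up (gg T r up st a) b) (gg T r up (gg T r up st b) a).
Proof.
move=> HT H2 Hab Hu.
have [Hs Hun] := cand_sorted st HT.
set F := cand T st in H2 Hs Hun *.
have Hn : F != [::] by case: (F) H2.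
have Hub : 0 < up b by rewrite -Hab.
have [Ea Sa] := cand_gg r (c:=a) HT Hn Hu.
have [Eb Sb] := cand_gg r (c:=b) HT Hn Hub.
have Hna : cand T (gg T r up st a) != [::].
  by rewrite -size_eq0 Sa; case: (size F) H2 => // [] [].
have Hnb : cand T (gg T r up st b) != [::].
  by rewrite -size_eq0 Sb; case: (size F) H2 => // [] [].
rewrite (gg_cons _ _ _ Hna) (gg_cons _ _ _ Hnb) Ea Eb.
rewrite [(gg T r up st a)]gg_cons // [(gg T r up st b)]gg_cons //=.
rewrite -/F.
set x := nf F a; set y' := nf F b.
case: (eqVneq x y') => Hxy.
-
  have Ex : nf [seq d <- F | d != x] b = nf [seq d <- F | d != x] a.
    rewrite (nf_rem_same Hs Hn (erefl x)).
    by rewrite (nf_rem_same Hs Hn (esym Hxy)).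
  rewrite -Hxy Ex.
  set w := nf [seq d <- F | d != x] a.
  rewrite -Hab; split; first by move=> ?.
  rewrite /=.
  have Hw : w \in [seq d <- F | d != x] by apply: nf_in; rewrite -size_eq0 size_filter1 // ?nf_in //; case: (size F) H2 => // [] [].
  move: Hw; rewrite mem_filter => /andP[Hwx HwF].
  have := nf_prop a Hs Hn; have := nf_prop b Hs Hn.
  rewrite -/x -/y' -Hxy /nfspec.
  move: Hwx => /eqP Hwx.
  move=> [[H1 H2b]|[H1 H2b]] [[H3 H4]|[H3 H4]].
  + have := H2b w HwF; have := H4 w HwF.
    case: (ltnP x a); case: (ltnP w b); case: (ltnP x b); case: (ltnP w a); lia.
  + have := H2b w HwF; have := H4 w HwF.
    case: (ltnP x a); case: (ltnP w b); case: (ltnP x b); case: (ltnP w a); lia.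
  + have := H2b w HwF; have := H4 w HwF.
    case: (ltnP x a); case: (ltnP w b); case: (ltnP x b); case: (ltnP w a); lia.
  + have := H2b w HwF; have := H4 w HwF.
    case: (ltnP x a); case: (ltnP w b); case: (ltnP x b); case: (ltnP w a); lia.
- have E1 : nf [seq d <- F | d != x] b = y'.
    by apply: nf_rem => //; rewrite eq_sym.
  have E2 : nf [seq d <- F | d != y'] a = x by apply: nf_rem.
  rewrite E1 E2; split => /=; last by rewrite Hab; lia.
  by rewrite Hab; apply: upd_comm.
Qed.

Lemma mtf T r up u1 x st : sorted ltn T -> all (fun y => up y == up x) u1 ->
  0 < up x -> size u1 < size (cand T st) ->
  steq (foldl (gg T r up) st (rcons u1 x)) (foldl (gg T r up) (gg T r up st x) u1).
Proof.
move=> HT; elim: u1 st => [|y u1 IH] st //= /andP[/eqP Hy Hall] Hx Hs.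
have Hn : cand T st != [::] by rewrite -size_eq0; case: (size (cand T st)) Hs.
have Hy0 : 0 < up y by rewrite Hy.
have [_ Sz] := cand_gg r (c:=y) HT Hn Hy0.
apply: steq_trans (IH _ Hall Hx _) _; first by rewrite Sz; case: (size (cand T st)) Hs.
apply: foldl_congr; apply: gg_swap => //.
by case: (size (cand T st)) Hs => // [] [].
Qed.

Lemma mtf_cat T r up u1 x u2 st : sorted ltn T -> all (fun y => up y == up x) u1 ->
  0 < up x -> size u1 < size (cand T st) ->
  steq (foldl (gg T r up) st (u1 ++ x :: u2)) (foldl (gg T r up) (gg T r up st x) (u1 ++ u2)).
Proof.
move=> HT Ha Hx Hs; rewrite -cat_rcons !foldl_cat.
by apply: foldl_congr; apply: mtf.
Qed.

Lemma foldl_up_ext T r up up' s st : {in s, up =1 up'} ->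
  foldl (gg T r up) st s = foldl (gg T r up') st s.
Proof.
elim: s st => [|c s IH] st //= H.
have -> : gg T r up st c = gg T r up' st c by rewrite /gg H // mem_head.
by apply: IH => z Hz; apply: H; rewrite inE Hz orbT.
Qed.

Lemma sim T r up s st1 st2 c' : uniq T ->
  (forall x, x != c' -> st1.1 x = st2.1 x) -> st1.1 c' != 0 ->
  let res1 := foldl (gg T r up) st1 s in
  let res2 := foldl (gg [seq d <- T | d != c'] r up) st2 s in
  (forall x, x != c' -> res1.1 x = res2.1 x) /\ res1.1 c' = st1.1 c' /\
  res1.2 + st2.2 = res2.2 + st1.2.
Proof.
move=> HT; elim: s st1 st2 => [|c s IH] st1 st2 H1 H2 /=; first by rewrite addnC.
have Ec : cand T st1 = cand [seq d <- T | d != c'] st2.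
  rewrite /cand -filter_predI; apply: eq_filter => d /=.
  case: (eqVneq d c') => [->|Hd] /=; first by rewrite (negbTE H2) andbF.
  by rewrite H1 // andbT.
case E: (cand T st1) => [|d0 t].
  rewrite !gg_nil -?Ec //.
  exact: IH.
have Hn : cand T st1 != [::] by rewrite E.
have Hn2 : cand [seq d <- T | d != c'] st2 != [::] by rewrite -Ec E.
rewrite (gg_cons _ _ _ Hn) (gg_cons _ _ _ Hn2) -Ec.
have Hd : nf (cand T st1) c != c'.
  have := nf_in c Hn; rewrite /cand mem_filter => /andP[Hz _].
  by apply/eqP => Heq; move: Hz; rewrite Heq (negbTE H2).
set d := nf (cand T st1) c.
set k := (if d < c then up c - r + 1 else 0).
have Hh1 : forall x, x != c' -> (upd st1.1 d (up c), st1.2 + k).1 x = (upd st2.1 d (up c), st2.2 + k).1 x.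
  by move=> x Hx /=; rewrite /upd H1.
have Hh2 : (upd st1.1 d (up c), st1.2 + k).1 c' != 0.
  by rewrite /= /upd (eq_sym c') (negbTE Hd).
have [IH1 [IH2 IH3]] := IH _ _ Hh1 Hh2.
split => //; split.
  by rewrite IH2 /= /upd (eq_sym c') (negbTE Hd).
by move: IH3 => /=; lia.
Qed.

Lemma foldl_bound T r up s st B : (forall x, st.1 x <= B) ->
  {in s, forall c, up c <= B} -> forall x, (foldl (gg T r up) st s).1 x <= B.
Proof.
elim: s st => [|c s IH] st //= H Hs.
apply: IH; last by move=> z Hz; apply: Hs; rewrite inE Hz orbT.
rewrite /gg; case: [seq d <- T | st.1 d == 0] => // d0 t x /=.
by case: ifP => _; [apply: Hs; rewrite mem_head | apply: H].
Qed.

Definition ordf (up : nat -> nat) := fun a b : nat => (up b < up a) || ((up a == up b) && (a <= b)).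

Definition stepR (S T : seq nat) (r : nat) (lab : nat -> nat) : (nat -> nat) * nat :=
  let up := fun c => if lab c == 0 then r else lab c in
  foldl (gg T r up) ((fun _ => 0), 0) (sort (ordf up) S).

Lemma step_eq n (M : seq {set 'I_n}) r lab :
  step M r lab = stepR (cols M r) (cols M r.-1) r lab.
Proof. by []. Qed.

Lemma ordf_trans up : transitive (ordf up).
Proof.
move=> b a c; rewrite /ordf => /orP[H1|/andP[/eqP H1 H2]] /orP[H3|/andP[/eqP H3 H4]].
- by rewrite (ltn_trans H3 H1).
- by rewrite -H3 H1.
- by rewrite H1 H3.
- by rewrite H1 H3 eqxx (leq_trans H2 H4) orbT.
Qed.

Lemma ordf_total up : total (ordf up).
Proof.
move=> a b; rewrite /ordf; case: (ltngtP (up a) (up b)) => H /=; rewrite ?orbT //.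
exact: leq_total.
Qed.

Lemma ordf_anti up : antisymmetric (ordf up).
Proof.
move=> a b; rewrite /ordf => /andP[].
case: (ltngtP (up a) (up b)) => H //= H1 H2.
by apply/eqP; rewrite eqn_leq H1 H2.
Qed.

Lemma row S T r lab lab' c L : sorted ltn S -> sorted ltn T -> size S <= size T ->
  c \in S -> 0 < r ->
  (if lab c == 0 then r else lab c) = L ->
  (forall x, x \in S -> (if lab x == 0 then r else lab x) <= L) ->
  (forall x, x \in S -> x != c -> lab' x = lab x) ->
  let c' := nf T c in
  let res := stepR S T r lab in
  let res' := stepR (rem c S) (rem c' T) r lab' in
  res.2 = res'.2 + (if c' < c then L - r + 1 else 0) /\ res.1 c' = L /\
  (forall x, x != c' -> res.1 x = res'.1 x) /\ (forall x, res.1 x <= L).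
Proof.
move=> HS HT HST Hc Hr Hup Hle Hlab c' res res'.
set up := fun c => if lab c == 0 then r else lab c.
set up' := fun c => if lab' c == 0 then r else lab' c.
have HSu : uniq S by move: HS; rewrite ltn_sorted_uniq_leq => /andP[].
have HTu : uniq T by move: HT; rewrite ltn_sorted_uniq_leq => /andP[].
have HTs : sorted leq T by move: HT; rewrite ltn_sorted_uniq_leq => /andP[].
set order := sort (ordf up) S.
have Hso : sorted (ordf up) order by apply: sort_sorted; apply: ordf_total.
have Hpo : perm_eq order S by rewrite perm_sort.
have Hco : c \in order by rewrite mem_sort.
have Huo : uniq order by rewrite (perm_uniq Hpo).
set i := index c order.
set u1 := take i order; set u2 := drop i.+1 order.
have Eo : order = u1 ++ c :: u2.
  by rewrite /u1 /u2 -{1}(cat_take_drop i order) (drop_nth c) ?index_mem // nth_index.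
have Hall : all (fun y => up y == up c) u1.
  move: Hso; rewrite (sorted_pairwise (@ordf_trans up)) Eo pairwise_cat.
  case/and3P => /allrelP Hrel _ _; apply/allP => y Hy.
  have := Hrel y c Hy (mem_head _ _); rewrite /ordf => /orP[H|/andP[/eqP -> _]] //.
  have HyS : y \in S by rewrite -(perm_mem Hpo) Eo mem_cat Hy.
  have Hy' := Hle y HyS; exfalso; move: H; rewrite /up Hup ltnNge.
  by rewrite Hy'.
have Hupc : up c = L by [].
have HL : 0 < L by rewrite -Hupc /up; case: eqP => // /eqP; rewrite lt0n.
have Hsz : size u1 < size (cand T ((fun _ => 0), 0)).
  have -> : cand T ((fun _ => 0), 0) = T by rewrite /cand /= filter_predT.
  have Hsz' : size order = size S by rewrite (perm_size Hpo).
  apply: leq_trans HST; rewrite -Hsz' Eo size_cat /=.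
  by rewrite addnS ltnS leq_addr.
have Hupc0 : 0 < up c by rewrite Hupc.
have Hstep1 := @mtf_cat T r up u1 c u2 ((fun _ => 0), 0) HT Hall Hupc0 Hsz.
have HTn : T != [::] by case: (T) HST Hc => //; case: (S).
have Hg : gg T r up ((fun _ => 0), 0) c = (upd (fun _ => 0) c' L, if c' < c then L - r + 1 else 0).
  have Hc0 : cand T ((fun _ => 0), 0) = T by rewrite /cand /= filter_predT.
  by rewrite gg_cons ?Hc0 // Hupc.
rewrite Hg in Hstep1.
have Hc'T : c' \in T by apply: nf_in.
have [S1 [S2 S3]] := sim r up (u1 ++ u2) (st2 := ((fun _ => 0), 0)) HTu
   (st1 := (upd (fun _ => 0) c' L, if c' < c then L - r + 1 else 0))
   (c' := c') (ltac:(by move=> x Hx; rewrite /= /upd (negbTE Hx)))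
   (ltac:(by rewrite /= /upd eqxx -lt0n)).
have Eres : res = foldl (gg T r up) ((fun _ => 0), 0) (u1 ++ c :: u2) by rewrite -Eo.
have Hperm : perm_eq (rem c S) (u1 ++ u2).
  have Hp1 : perm_eq (u1 ++ c :: u2) (c :: u1 ++ u2).
    by rewrite -[c :: u2]cat1s perm_catCA.
  rewrite -(perm_cons c).
  apply: (@perm_trans _ S); first by rewrite perm_sym; exact: perm_to_rem.
  apply: (@perm_trans _ order); first by rewrite perm_sym.
  rewrite Eo; exact: Hp1.
have Hcn : c \notin u1 ++ u2.
  by rewrite -(perm_mem Hperm) mem_rem_uniqF.
have Eord' : sort (ordf up') (rem c S) = u1 ++ u2.
  have Hin : {in rem c S &, ordf up' =2 ordf up}.
    move=> a b Ha Hb; rewrite /ordf /up /up'.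
    have Ha' : a != c by apply/eqP => E; move: Ha; rewrite E mem_rem_uniqF.
    have Hb' : b != c by apply/eqP => E; move: Hb; rewrite E mem_rem_uniqF.
    rewrite !Hlab //; by [apply: (mem_rem Ha) | apply: (mem_rem Hb)].
  apply: (sorted_eq (@ordf_trans up) (@ordf_anti up)).
  - rewrite -(eq_in_sorted (P := mem (rem c S)) Hin); last by apply/allP => z; rewrite mem_sort.
    by apply: sort_sorted; apply: ordf_total.
  - apply: (subseq_sorted (@ordf_trans up) _ Hso); rewrite Eo.
    by rewrite cat_subseq // subseq_cons.
  - by rewrite perm_sort.
have Eres' : res' = foldl (gg [seq d <- T | d != c'] r up) ((fun _ => 0), 0) (u1 ++ u2).
  rewrite /res' /stepR -/up' Eord' (rem_filter _ HTu).
  apply: foldl_up_ext => z Hz; rewrite /up /up'.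
  have HzS : z \in rem c S by rewrite (perm_mem Hperm).
  have Hzc : z != c by apply/eqP => E; move: Hcn; rewrite -E Hz.
  by rewrite Hlab // (mem_rem HzS).
case: Hstep1 => [Hf Hcost].
rewrite -Eres in Hf Hcost.
rewrite -Eres' in S1 S3.
split; first by move: S3 => /=; rewrite addn0 => <-; exact: Hcost.
split; first by rewrite Hf S2 /= /upd eqxx.
split; first by move=> x Hx; rewrite (Hf x) (S1 x Hx).
apply: foldl_bound => //= z Hz; apply: Hle; by rewrite -(perm_mem Hpo).
Qed.

Fixpoint majR (R : nat -> seq nat) (r : nat) (lab : nat -> nat) : nat :=
  match r with
  | S ((S _) as r0) => let p := stepR (R r) (R r.-1) r lab in p.2 + majR R r0 p.1
  | _ => 0
  end.

Lemma majrec_eq n (M : seq {set 'I_n}) r lab : majrec M r lab = majR (cols M) r lab.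
Proof.
elim: r lab => [|r IH] lab //.
case: r IH => [|r] IH //.
have -> : majrec M r.+2 lab = (step M r.+2 lab).2 + majrec M r.+1 (step M r.+2 lab).1 by [].
have -> : majR (cols M) r.+2 lab = (stepR (cols M r.+2) (cols M r.+1) r.+2 lab).2 +
   majR (cols M) r.+1 (stepR (cols M r.+2) (cols M r.+1) r.+2 lab).1 by [].
by rewrite IH.
Qed.

Fixpoint chd (R : nat -> seq nat) (L k : nat) : nat :=
  match k with
  | 0 => head 0 (R L)
  | k'.+1 => nf (R (L - k)) (chd R L k')
  end.

Definition ch R L r := chd R L (L - r).

Lemma ch_top R L : ch R L L = head 0 (R L).
Proof. by rewrite /ch subnn. Qed.

Lemma ch_step R L r : 0 < r < L -> ch R L r = nf (R r) (ch R L r.+1).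
Proof.
move=> /andP[H1 H2]; rewrite /ch.
have -> : L - r = (L - r.+1).+1 by lia.
rewrite /=; congr nf; congr R; lia.
Qed.

Section Rows.
Variables (R : nat -> seq nat) (L : nat).
Hypothesis HR : forall r, sorted ltn (R r).
Hypothesis Hsz : forall r, 0 < r < L -> size (R r.+1) <= size (R r).
Hypothesis HL : R L != [::].

Lemma rows_ne r : 0 < r <= L -> R r != [::].
Proof.
move=> /andP[H1 H2].
have [k Hk] : exists k, r = L - k by exists (L - r); lia.
have Hk' : k < L by lia.
rewrite Hk; clear Hk H1 H2.
elim: k Hk' => [|k IH] Hk; first by rewrite subn0.
have Hkk : 0 < L - k.+1 < L by apply/andP; split; lia.
have := Hsz Hkk.
have -> : (L - k.+1).+1 = L - k by lia.
move: (IH (ltac:(lia))) => Hne Hle'.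
rewrite -size_eq0 -lt0n; apply: leq_trans Hle'; by rewrite lt0n size_eq0.
Qed.

Lemma ch_in r : 0 < r <= L -> ch R L r \in R r.
Proof.
move=> Hr; case: (ltngtP r L) => H.
- rewrite ch_step; last by move: Hr => /andP[-> _].
  by apply: nf_in; apply: rows_ne.
- by move: Hr; lia.
- by rewrite H ch_top; case: (R L) HL => // a s _; rewrite mem_head.
Qed.

End Rows.

Definition Rm R L r := if (0 < r <= L) then rem (ch R L r) (R r) else R r.

Definition wcost R L r := if ch R L r.-1 < ch R L r then L - r + 1 else 0.

Lemma maj_chain R L : (forall r, sorted ltn (R r)) ->
  (forall r, 0 < r < L -> size (R r.+1) <= size (R r)) -> R L != [::] ->
  forall r, 0 < r <= L -> forall lab lab',
  (if lab (ch R L r) == 0 then r else lab (ch R L r)) = L ->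
  (forall x, x \in R r -> (if lab x == 0 then r else lab x) <= L) ->
  (forall x, x \in R r -> x != ch R L r -> lab' x = lab x) ->
  majR R r lab = \sum_(2 <= i < r.+1) wcost R L i + majR (Rm R L) r lab'.
Proof.
move=> HR Hsz HL; elim=> [|r IH] // Hr lab lab' Hup Hle Hlab.
case: r IH Hr Hup Hle Hlab => [|r] IH Hr Hup Hle Hlab.
  by rewrite big_geq.
have Hr1 : 0 < r.+1 <= L by move: Hr; lia.
have Hc := ch_in Hsz HL Hr.
have Hst : ch R L r.+1 = nf (R r.+1) (ch R L r.+2) by apply: ch_step; move: Hr; lia.
have HS := HR r.+2; have HT := HR r.+1.
have HST : size (R r.+2) <= size (R r.+1) by apply: Hsz; move: Hr; lia.
have [E1 [E2 [E3 E4]]] := @row (R r.+2) (R r.+1) r.+2 lab lab' (ch R L r.+2) L HS HT HST Hc isT Hup Hle Hlab.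
have Hunf : forall R0 lab0, majR R0 r.+2 lab0 = (stepR (R0 r.+2) (R0 r.+1) r.+2 lab0).2 +
   majR R0 r.+1 (stepR (R0 r.+2) (R0 r.+1) r.+2 lab0).1 by [].
rewrite !Hunf.
have ERm2 : Rm R L r.+2 = rem (ch R L r.+2) (R r.+2) by rewrite /Rm Hr.
have ERm1 : Rm R L r.+1 = rem (ch R L r.+1) (R r.+1) by rewrite /Rm Hr1.
rewrite ERm2 ERm1 Hst E1.
rewrite (IH Hr1 _ (stepR (rem (ch R L r.+2) (R r.+2)) (rem (nf (R r.+1) (ch R L r.+2)) (R r.+1)) r.+2 lab').1).
- rewrite [in RHS]big_nat_recr //=.
  have -> : wcost R L r.+2 = (if nf (R r.+1) (ch R L r.+2) < ch R L r.+2 then L - r.+2 + 1 else 0).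
    by rewrite /wcost Hst.
  set a := \sum_(2 <= i < r.+2) wcost R L i.
  set b := (if nf (R r.+1) (ch R L r.+2) < ch R L r.+2 then L - r.+2 + 1 else 0).
  set c := (stepR _ _ _ _).2.
  set d := (majR _ _ _).
  clear; lia.
- rewrite Hst E2.
  have HL0 : L != 0.
    by rewrite -lt0n; case/andP: Hr => _ H; apply: leq_trans H.
  by rewrite (negbTE HL0).
- move=> x _; have := E4 x.
  by case: eqP => // _; move: Hr; lia.
- by move=> x _ Hx; rewrite -Hst in E3 *; rewrite E3.
Qed.

Definition ltc (x y : nat * nat) := (x.1 < y.1) || ((x.1 == y.1) && (y.2 < x.2)).

Lemma ltc_trans : transitive ltc.
Proof.
move=> [b1 b2] [a1 a2] [c1 c2]; rewrite /ltc /=.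
move=> /orP[H1|/andP[/eqP E1 H1]] /orP[H2|/andP[/eqP E2 H2]].
- by rewrite (ltn_trans H1 H2).
- by rewrite -E2 H1.
- by rewrite E1 H2.
- by rewrite E1 E2 eqxx (ltn_trans H2 H1) orbT.
Qed.

Lemma ltc_irr : irreflexive ltc.
Proof. by move=> [a b]; rewrite /ltc /= ltnn eqxx ltnn. Qed.

Lemma ltc_asym x y : ltc x y -> ltc y x = false.
Proof.
case: x y => [a b] [c d]; rewrite /ltc /=.
case: (ltngtP a c) => H //= H1; rewrite ?andbF //.
by apply/negbTE; rewrite -leqNgt ltnW.
Qed.

Lemma ltc_nth s a b : sorted ltc s -> a < size s -> b < size s ->
  ltc (nth (0,0) s a) (nth (0,0) s b) = (a < b).
Proof.
move=> Hs Ha Hb; case: (ltngtP a b) => H.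
- by apply: (sorted_ltn_nth ltc_trans (0,0) Hs) => //; rewrite inE.
- apply: ltc_asym.
  by apply: (sorted_ltn_nth ltc_trans (0,0) Hs) => //; rewrite inE.
- by rewrite H ltc_irr.
Qed.

Lemma ltc_index s x y : sorted ltc s -> x \in s -> y \in s ->
  ltc x y = (index x s < index y s).
Proof.
move=> Hs Hx Hy; rewrite -(ltc_nth Hs) ?index_mem //.
by rewrite !nth_index.
Qed.

Definition cellsR n L (R : nat -> seq nat) : seq (nat * nat) :=
  flatten [seq [seq (j, r) | r <- [seq r <- rev (iota 1 L) | j \in R r]] | j <- iota 0 n].

Definition Wd n L R := map snd (cellsR n L R).

Lemma cw_eq n (M : seq {set 'I_n}) : cw M = Wd n (size M) (cols M).
Proof.
rewrite /cw /Wd /cellsR map_flatten -val_enum_ord -!map_comp.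
congr flatten; apply: eq_map => j /=.
rewrite -map_comp map_id; apply: eq_filter => r.
by rewrite /cols (mem_map val_inj) mem_filter mem_enum andbT.
Qed.

Lemma mem_cells n L R j r :
  ((j, r) \in cellsR n L R) = [&& j < n, 0 < r <= L & j \in R r].
Proof.
apply/flatten_mapP/and3P => [[j' Hj' /mapP[r' Hr' [E1 E2]]]|[Hj Hr HjR]].
- move: Hj' Hr'; rewrite -E1 -E2 mem_iota mem_filter mem_rev mem_iota.
  move=> /andP[_ Hj] /andP[HR /andP[H1 H2]]; split => //.
  by apply/andP; split; lia.
- exists j; first by rewrite mem_iota.
  apply: map_f; rewrite mem_filter HjR mem_rev mem_iota; lia.
Qed.

Lemma pairwise_cells L (R : nat -> seq nat) (s : seq nat) : sorted ltn s ->
  pairwise ltc (flatten [seq [seq (j, r) | r <- [seq r <- rev (iota 1 L) | j \in R r]] | j <- s]).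
Proof.
elim: s => [|j s IH] //= Hs.
rewrite pairwise_cat; apply/and3P; split.
- apply/allrelP => x y /mapP[r _ ->] /flatten_mapP[j' Hj' /mapP[r' _ ->]].
  rewrite /ltc /=.
  have := order_path_min ltn_trans Hs => /allP /(_ j' Hj') ->; done.
- rewrite pairwise_map.
  have Hsr : sorted (fun a b => b < a) [seq r <- rev (iota 1 L) | j \in R r].
    apply: sorted_filter; first by move=> a b c H1 H2; apply: ltn_trans H2 H1.
    by rewrite rev_sorted; exact: iota_ltn_sorted.
  move: Hsr; rewrite sorted_pairwise; last by move=> a b c H1 H2; apply: ltn_trans H2 H1.
  apply: sub_pairwise => a b /=; rewrite /ltc /= ltnn eqxx /=.
  by [].
- by apply: IH; move: Hs; case: (s) => //= a t /andP[].
Qed.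

Lemma cells_sorted n L R : sorted ltc (cellsR n L R).
Proof.
rewrite sorted_pairwise; last exact: ltc_trans.
apply: pairwise_cells; exact: iota_ltn_sorted.
Qed.

Lemma cells_uniq n L R : uniq (cellsR n L R).
Proof.
apply: (@sorted_uniq _ ltc); [exact: ltc_trans | exact: ltc_irr | exact: cells_sorted].
Qed.

Lemma filter_iota_first (Q : pred nat) N y : y < N -> Q y ->
  (forall z, z < y -> ~~ Q z) ->
  [seq q <- iota 0 N | Q q] = y :: [seq q <- iota y.+1 (N - y.+1) | Q q].
Proof.
move=> HyN HQ Hz.
have -> : iota 0 N = iota 0 y ++ iota y (N - y).
  by rewrite -iotaD subnKC // ltnW.
have -> : N - y = (N - y.+1).+1 by lia.
rewrite filter_cat /= HQ.
rewrite (eq_in_filter (a2 := pred0)); first by rewrite filter_pred0.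
by move=> z; rewrite mem_iota => /andP[_ Hzy]; apply/negbTE; apply: Hz.
Qed.

Lemma filter_iota_nil (Q : pred nat) N : (forall z, z < N -> ~~ Q z) ->
  [seq q <- iota 0 N | Q q] = [::].
Proof.
move=> H; rewrite (eq_in_filter (a2 := pred0)); first by rewrite filter_pred0.
by move=> z; rewrite mem_iota => /andP[_ Hz]; apply/negbTE; apply: H.
Qed.

Lemma find_first (T : eqType) (P : pred T) (s : seq T) y x0 : y \in s -> P y ->
  (forall i, i < index y s -> ~~ P (nth x0 s i)) -> find P s = index y s.
Proof.
elim: s => [|a s IH] //= Hy HP Hb.
case: (eqVneq a y) => [->|Ha]; first by rewrite HP.
have HPa : P a = false by apply/negbTE; apply: (Hb 0); rewrite /= (negbTE Ha).
rewrite HPa; congr S; apply: IH.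
- by move: Hy; rewrite inE eq_sym (negbTE Ha).
- by [].
- by move=> i Hi; apply: (Hb i.+1); rewrite /= (negbTE Ha).
Qed.

Lemma head_min (s : seq nat) e : sorted leq s -> e \in s -> head 0 s <= e.
Proof.
case: s => [|a s] //= Hs; rewrite inE => /orP[/eqP -> //|He].
by have := order_path_min leq_trans Hs => /allP; apply.
Qed.

Lemma foldr_max_le (w : seq nat) L : (forall a, a \in w -> a <= L) -> foldr maxn 0 w <= L.
Proof.
elim: w => [|a w IH] //= H.
rewrite geq_max; apply/andP; split; first by apply: H; rewrite mem_head.
apply: IH => b Hb; apply: H; by rewrite inE Hb orbT.
Qed.

Lemma foldr_max (w : seq nat) L : (forall a, a \in w -> a <= L) -> L \in w ->
  foldr maxn 0 w = L.
Proof.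
elim: w => [|a w IH] //= H; rewrite inE => /orP[/eqP <-|HL].
- apply/maxn_idPl; apply: foldr_max_le => b Hb; apply: H; by rewrite inE Hb orbT.
- have -> : foldr maxn 0 w = L.
    apply: IH => //.
    move=> e He; apply: H; by rewrite inE He orbT.
  by apply/maxn_idPr; apply: H; rewrite mem_head.
Qed.

Lemma rev_iotaS l : rev (iota 1 l.+1) = l.+1 :: rev (iota 1 l).
Proof.
have -> : iota 1 l.+1 = iota 1 l ++ [:: l.+1] by rewrite -[l.+1]addn1 iotaD add1n ?addn1.
by rewrite rev_cat.
Qed.

Definition isC (R : nat -> seq nat) L (v : nat * nat) := (0 < v.2 <= L) && (v.1 == ch R L v.2).

Lemma filter_nth_iota (T : Type) (x0 : T) (s : seq T) (P : pred T) :
  [seq nth x0 s q | q <- [seq q <- iota 0 (size s) | P (nth x0 s q)]] = filter P s.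
Proof.
transitivity (filter P (map (nth x0 s) (iota 0 (size s)))); first by rewrite filter_map.
by rewrite -/(mkseq _ _) mkseq_nth.
Qed.

Section Word.
Variables (n L : nat) (R : nat -> seq nat).
Hypothesis HR : forall r, sorted ltn (R r).
Hypothesis Hn : forall r, all (fun j => j < n) (R r).
Hypothesis Hsz : forall r, 0 < r < L -> size (R r.+1) <= size (R r).
Hypothesis HL : R L != [::].

Local Notation cells := (cellsR n L R).
Local Notation w := (Wd n L R).
Local Notation N := (size (cellsR n L R)).
Local Notation pos y := (index y (cellsR n L R)).

Lemma HRleq r : sorted leq (R r).
Proof. by have := HR r; rewrite ltn_sorted_uniq_leq => /andP[]. Qed.

Lemma HRuniq r : uniq (R r).
Proof. by have := HR r; rewrite ltn_sorted_uniq_leq => /andP[]. Qed.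

Lemma inR_n r j : j \in R r -> j < n.
Proof. by move=> H; have /allP := Hn r; apply. Qed.

Lemma ch_cell r : 0 < r <= L -> (ch R L r, r) \in cells.
Proof.
move=> Hr; have Hc := ch_in Hsz HL Hr.
by rewrite mem_cells Hr Hc (inR_n Hc).
Qed.

Lemma cell_prop v : v \in cells -> [/\ v.1 < n, 0 < v.2 <= L & v.1 \in R v.2].
Proof. by case: v => a b; rewrite mem_cells => /and3P[]. Qed.

Lemma nth_w q : q < N -> nth 0 w q = (nth (0,0) cells q).2.
Proof. by move=> Hq; rewrite /Wd (nth_map (0,0)). Qed.

Lemma next_occ_cell c l : 0 < l -> l < L -> (c, l.+1) \in cells ->
  next_occ w l (pos (c, l.+1)) = pos (nf (R l) c, l).
Proof.
move=> Hl0 HlL Hx.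
set z := nf (R l) c.
have HRl : R l != [::] by apply: (rows_ne Hsz HL); rewrite Hl0 (ltnW HlL).
have Hz : z \in R l by apply: nf_in.
have Hy : (z, l) \in cells by rewrite mem_cells (inR_n Hz) Hz andbT; lia.
have Hsw : size w = N by rewrite size_map.
rewrite /next_occ Hsw -filter_predI.
have HxN : pos (c, l.+1) < N by rewrite index_mem.
have HyN : pos (z, l) < N by rewrite index_mem.
have Hso := cells_sorted n L R.
have Hltx : forall q, q < N -> (pos (c, l.+1) < q) = ltc (c, l.+1) (nth (0,0) cells q).
  by move=> q Hq; rewrite -{2}(nth_index (0,0) Hx) ltc_nth.
have Hlty : forall q, q < N -> (q < pos (z, l)) = ltc (nth (0,0) cells q) (z, l).
  by move=> q Hq; rewrite -{2}(nth_index (0,0) Hy) ltc_nth.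
have Hnthy : nth 0 w (pos (z, l)) = l by rewrite nth_w // nth_index.
have Hcell : forall q, q < N -> exists j, nth (0,0) cells q = (j, (nth (0,0) cells q).2) /\
     j \in R (nth (0,0) cells q).2.
  move=> q Hq; have := cell_prop (mem_nth (0,0) Hq).
  case: (nth (0,0) cells q) => a b /= [_ _ Hab]; by exists a.
have := nf_prop c (HRleq l) HRl; rewrite -/z => -[[H1 H2]|[H1 H2]].
- rewrite (@filter_iota_first _ _ (pos (z, l))) //=.
  + rewrite Hltx // nth_index // /ltc /= ltnSn andbT Hnthy eqxx andbT.
    by rewrite orbC -leq_eqVlt.
  + move=> q Hq; have HqN : q < N by apply: ltn_trans HyN.
    rewrite /= Hltx // nth_w //; apply/negP => /andP[Hlt /eqP Hl].
    move: Hq; rewrite Hlty //.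
    have [j [Ej HjR]] := Hcell q HqN.
    move: Hlt; rewrite Ej Hl in HjR * => Hlt.
    rewrite /ltc /= ltnn andbF orbF => Hjz.
    move: Hlt; rewrite /ltc /= ltnSn andbT => Hcj.
    have Hcj' : c <= j by move: Hcj => /orP[/ltnW //|/eqP ->].
    have := H2 j HjR Hcj'; move: Hjz; clear; lia.
- rewrite filter_iota_nil; last first.
    move=> q HqN; rewrite /= Hltx // nth_w //; apply/negP => /andP[Hlt /eqP Hl].
    have [j [Ej HjR]] := Hcell q HqN.
    move: Hlt; rewrite Ej Hl in HjR * => Hlt.
    move: Hlt; rewrite /ltc /= ltnSn andbT => Hcj.
    have Hcj' : c <= j by move: Hcj => /orP[/ltnW //|/eqP ->].
    have [Hjc _] := H2 j HjR; move: Hcj' Hjc; clear; lia.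
  rewrite /= (@filter_iota_first _ _ (pos (z, l))) //=; first by rewrite Hnthy.
  move=> q Hq; have HqN : q < N by apply: ltn_trans HyN.
  rewrite nth_w //; apply/negP => /eqP Hl.
  move: Hq; rewrite Hlty //.
  have [j [Ej HjR]] := Hcell q HqN.
  rewrite Ej Hl in HjR * => /=.
  rewrite /ltc /= ltnn andbF orbF => Hjz.
  have [_ Hzj] := H2 j HjR; move: Hjz Hzj; clear; lia.
Qed.

End Word.

Section Word2.
Variables (n L : nat) (R : nat -> seq nat).
Hypothesis HR : forall r, sorted ltn (R r).
Hypothesis Hn : forall r, all (fun j => j < n) (R r).
Hypothesis Hsz : forall r, 0 < r < L -> size (R r.+1) <= size (R r).
Hypothesis HL : R L != [::].

Local Notation cells := (cellsR n L R).
Local Notation w := (Wd n L R).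
Local Notation N := (size (cellsR n L R)).
Local Notation pos y := (index y (cellsR n L R)).


Lemma idx_top : 0 < L -> index L w = pos (ch R L L, L).
Proof.
move=> HL0.
have Hy : (ch R L L, L) \in cells by apply: ch_cell => //; rewrite HL0 leqnn.
rewrite /index /Wd find_map.
apply: (find_first (x0 := (0,0))) => //=.
move=> i Hi; apply/negP => /eqP Hl.
have HiN : i < N by apply: ltn_trans Hi _; rewrite index_mem.
have := cell_prop (mem_nth (0,0) HiN).
move: Hi; rewrite -(nth_index (0,0) Hy) (index_uniq _ _ (cells_uniq n L R)); last by rewrite index_mem.
rewrite -(ltc_nth (cells_sorted n L R)) ?index_mem //.
rewrite (nth_index (0,0) Hy).
case: (nth (0,0) cells i) Hl => a b /= -> Hlt [_ _ HaR].
move: Hlt; rewrite /ltc /= ltnn andbF orbF ch_top => Hlt.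
have := head_min (HRleq HR L) HaR; move: Hlt; clear; lia.
Qed.

Lemma maxletter_eq : 0 < L -> maxletter w = L.
Proof.
move=> HL0; apply: foldr_max.
- move=> a /mapP[v Hv ->]; by have [_ /andP[_ ->] _] := cell_prop Hv.
- apply/mapP; exists (ch R L L, L) => //; apply: ch_cell => //; by rewrite HL0 leqnn.
Qed.

Lemma chain_eq l : l < L ->
  chain w l (pos (ch R L l.+1, l.+1)) = [seq pos (ch R L r, r) | r <- rev (iota 1 l)].
Proof.
elim: l => [|l IH] Hl //=.
rewrite next_occ_cell //; last by apply: ch_cell => //; rewrite Hl.
rewrite -ch_step; last by rewrite Hl.
rewrite IH; last by apply: ltn_trans Hl.
by rewrite rev_iotaS.
Qed.

Lemma fp_eq : 0 < L ->
  first_positions w = [seq pos (ch R L r, r) | r <- rev (iota 1 L)].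
Proof.
move=> HL0; rewrite /first_positions maxletter_eq // idx_top //.
have EL := prednK HL0.
move: (L.-1) EL => L' EL.
have := chain_eq (l := L'); rewrite EL => Hc.
rewrite -[in LHS]EL /= EL Hc; last by rewrite -EL.
by rewrite -EL rev_iotaS EL.
Qed.

Lemma fp_mem q : 0 < L -> q < N -> (q \in first_positions w) = isC R L (nth (0,0) cells q).
Proof.
move=> HL0 Hq; rewrite fp_eq //; apply/mapP/idP.
- move=> [r Hr ->]; move: Hr; rewrite mem_rev mem_iota => Hr.
  have Hr' : 0 < r <= L by move: Hr; clear; lia.
  rewrite nth_index; last exact: ch_cell.
  by rewrite /isC /= Hr' eqxx.
- rewrite /isC => /andP[Hr /eqP Hc]; exists (nth (0,0) cells q).2.
    by rewrite mem_rev mem_iota; move: Hr; clear; lia.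
  rewrite -Hc -surjective_pairing index_uniq //; exact: cells_uniq.
Qed.

Lemma subword_eq : 0 < L -> charge_subword w = map snd (filter (isC R L) cells).
Proof.
move=> HL0; rewrite /charge_subword size_map.
rewrite (eq_in_filter (a2 := fun q => isC R L (nth (0,0) cells q))); last first.
  by move=> q; rewrite mem_iota add0n => /andP[_ Hq]; apply: fp_mem.
rewrite -(filter_nth_iota (0,0)) -map_comp; apply/eq_in_map => q.
rewrite mem_filter mem_iota add0n => /andP[_ /andP[_ Hq]] /=.
exact: nth_w.
Qed.

Lemma rest_eq : 0 < L -> charge_rest w = map snd (filter (predC (isC R L)) cells).
Proof.
move=> HL0; rewrite /charge_rest size_map.
rewrite (eq_in_filter (a2 := fun q => predC (isC R L) (nth (0,0) cells q))); last first.
  by move=> q; rewrite mem_iota add0n => /andP[_ Hq] /=; rewrite fp_mem.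
rewrite -(filter_nth_iota (0,0)) -map_comp; apply/eq_in_map => q.
rewrite mem_filter mem_iota add0n => /andP[_ /andP[_ Hq]] /=.
exact: nth_w.
Qed.

Lemma filter_Rm : filter (predC (isC R L)) cells = cellsR n L (Rm R L).
Proof.
rewrite /cellsR filter_flatten -map_comp; congr flatten; apply: eq_map => j /=.
rewrite filter_map -filter_predI; congr map; apply: eq_in_filter => r.
rewrite mem_rev mem_iota => Hr.
have Hr' : 0 < r <= L by move: Hr; clear; lia.
rewrite /= /Rm Hr' /isC /= Hr' /= (mem_rem_uniq _ (HRuniq HR r)) inE.
by [].
Qed.

Lemma size_rest : 0 < L -> size (Wd n L (Rm R L)) < size w.
Proof.
move=> HL0; rewrite /Wd !size_map -filter_Rm size_filter.
rewrite -(count_predC (isC R L) cells) -[X in X < _]add0n ltn_add2r.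
rewrite -has_count; apply/hasP; exists (ch R L L, L).
  by apply: ch_cell => //; rewrite leqnn andbT.
by rewrite /isC /= HL0 leqnn eqxx.
Qed.

End Word2.

Section Word3.
Variables (n L : nat) (R : nat -> seq nat).
Hypothesis HR : forall r, sorted ltn (R r).
Hypothesis Hn : forall r, all (fun j => j < n) (R r).
Hypothesis Hsz : forall r, 0 < r < L -> size (R r.+1) <= size (R r).
Hypothesis HL : R L != [::].

Local Notation cells := (cellsR n L R).

Lemma perm_charge :
  charge_perm (map snd (filter (isC R L) cells)) =
  \sum_(1 <= i < L) (if ch R L i < ch R L i.+1 then L - i else 0).
Proof.
set u := filter (isC R L) cells.
have Hus : sorted ltc u by apply: sorted_filter; [exact: ltc_trans | exact: cells_sorted].
have Huu : uniq u by apply: filter_uniq; exact: cells_uniq.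
have Hmemu : u =i [seq (ch R L r, r) | r <- iota 1 L].
  move=> v; rewrite mem_filter; apply/andP/mapP.
  - move=> [/andP[Hr /eqP Hc] Hv]; exists v.2; first by rewrite mem_iota add1n ltnS.
    by rewrite -Hc -surjective_pairing.
  - move=> [r Hr ->]; move: Hr; rewrite mem_iota add1n ltnS => Hr'.
    by rewrite /isC /= Hr' eqxx; split => //; apply: ch_cell.
have Hinj : injective (fun r => (ch R L r, r)) by move=> a b [].
have Hsize : size u = L.
  have Hp : perm_eq u [seq (ch R L r, r) | r <- iota 1 L].
    by apply: uniq_perm => //; rewrite map_inj_uniq // iota_uniq.
  by rewrite (perm_size Hp) size_map size_iota.
have Hidx : forall i, index i (map snd u) = index (ch R L i, i) u.
  move=> i; rewrite /index find_map; apply: eq_in_find => v Hv /=.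
  move: Hv; rewrite mem_filter => /andP[/andP[_ /eqP Hc] _].
  case: v Hc => a b /= ->.
  by case: (eqVneq b i) => [->|Hb]; rewrite ?eqxx // xpair_eqE (negbTE Hb) andbF.
rewrite /charge_perm size_map Hsize; apply: eq_big_nat => i /andP[Hi1 HiL].
rewrite !Hidx -(ltc_index Hus); first last.
- by rewrite Hmemu; apply: map_f; rewrite mem_iota add1n ltnS ?Hi1 ?HiL ?(ltnW HiL).
- by rewrite Hmemu; apply: map_f; rewrite mem_iota add1n ltnS ?Hi1 ?HiL ?(ltnW HiL).
by rewrite /ltc /= [i.+1 < i]ltnNge leqnSn andbF orbF.
Qed.

End Word3.

Lemma Wd0 n R : Wd n 0 R = [::].
Proof. by rewrite /Wd /cellsR /=; elim: (iota 0 n). Qed.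

Lemma charge_aux_nil f : charge_aux f [::] = 0.
Proof. by case: f. Qed.

Lemma majR_empty_top R L lab : R L.+1 = [::] -> majR R L.+1 lab = majR R L (fun _ => 0).
Proof.
move=> E; case: L E => [|L] E //.
have -> : majR R L.+2 lab = (stepR (R L.+2) (R L.+1) L.+2 lab).2 +
   majR R L.+1 (stepR (R L.+2) (R L.+1) L.+2 lab).1 by [].
by rewrite E.
Qed.

Lemma Wd_empty_top n R L : R L.+1 = [::] -> Wd n L.+1 R = Wd n L R.
Proof.
move=> E; rewrite /Wd /cellsR; congr (map snd (flatten _)); apply: eq_map => j.
by rewrite rev_iotaS /= E in_nil.
Qed.

Lemma Rm_hyp n L R : (forall r, sorted ltn (R r)) -> (forall r, all (fun j => j < n) (R r)) ->
  (forall r, 0 < r < L -> size (R r.+1) <= size (R r)) -> R L != [::] ->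
  [/\ (forall r, sorted ltn (Rm R L r)), (forall r, all (fun j => j < n) (Rm R L r)) &
      (forall r, 0 < r < L -> size (Rm R L r.+1) <= size (Rm R L r))].
Proof.
move=> HR Hn Hsz HL; split.
- move=> r; rewrite /Rm; case: ifP => _ //.
  rewrite rem_filter; last exact: HRuniq.
  by apply: sorted_filter => //; exact: ltn_trans.
- move=> r; rewrite /Rm; case: ifP => _ //.
  apply/allP => j Hj; have /allP := Hn r; apply; exact: mem_rem Hj.
- move=> r Hr.
  have Hr1 : 0 < r <= L by move: Hr; clear; lia.
  have Hr2 : 0 < r.+1 <= L by move: Hr; clear; lia.
  rewrite /Rm Hr1 Hr2 !size_rem; try by apply: ch_in.
  by rewrite -!subn1 leq_sub2r //; apply: Hsz.
Qed.

Lemma main n m : forall L R, L + size (Wd n L R) <= m ->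
  (forall r, sorted ltn (R r)) -> (forall r, all (fun j => j < n) (R r)) ->
  (forall r, 0 < r < L -> size (R r.+1) <= size (R r)) ->
  forall f, size (Wd n L R) <= f -> majR R L (fun _ => 0) = charge_aux f (Wd n L R).
Proof.
elim: m => [|m IH] L R Hm HR Hn Hsz f Hf.
  have -> : L = 0 by move: Hm; clear; lia.
  by rewrite Wd0 charge_aux_nil.
case: L Hm Hsz Hf => [|L] Hm Hsz Hf; first by rewrite Wd0 charge_aux_nil.
case: (eqVneq (R L.+1) [::]) => HL.
  rewrite majR_empty_top // Wd_empty_top //.
  apply: IH => //.
  - by move: Hm; rewrite Wd_empty_top //; clear; lia.
  - by move=> r Hr; apply: Hsz; move: Hr; clear; lia.
  - by rewrite -Wd_empty_top.
have HL0 : 0 < L.+1 by [].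
have Hcell : (ch R L.+1 L.+1, L.+1) \in cellsR n L.+1 R.
  by apply: ch_cell => //; rewrite leqnn.
have HWn : Wd n L.+1 R != [::].
  by rewrite /Wd; apply/eqP => E; move: Hcell; case: (cellsR n L.+1 R) E.
have Hsr := size_rest HR Hn Hsz HL HL0.
case: f Hf => [|f] Hf.
  by move: Hf; rewrite leqn0 size_eq0 (negbTE HWn).
have -> : charge_aux f.+1 (Wd n L.+1 R) =
  charge_perm (charge_subword (Wd n L.+1 R)) + charge_aux f (charge_rest (Wd n L.+1 R)).
  by rewrite /=; case: (Wd n L.+1 R) HWn.
rewrite subword_eq // rest_eq // filter_Rm // perm_charge //.
have [HR' Hn' Hsz'] := Rm_hyp HR Hn Hsz HL.
have HrL : 0 < L.+1 <= L.+1 by rewrite leqnn.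
rewrite (@maj_chain R L.+1 HR Hsz HL L.+1 HrL (fun _ => 0) (fun _ => 0)) //.
- rewrite -(IH L.+1 (Rm R L.+1)) //.
  + congr (_ + _).
    rewrite big_add1 /=; apply: eq_big_nat => i /andP[Hi1 HiL].
    rewrite /wcost /=; case: ifP => // _.
    by move: HiL; clear; lia.
  + by move: Hm Hsr; clear; lia.
  + by move: Hf Hsr; clear; lia.
Qed.

Lemma all2_nth (S T : Type) (P : S -> T -> bool) s t x0 y0 i :
  all2 P s t -> i < size s -> P (nth x0 s i) (nth y0 t i).
Proof.
elim: s t i => [|a s IH] [|b t] i //= /andP[H1 H2].
by case: i => [|i] Hi //; apply: IH.
Qed.

Lemma cols_sorted n (M : seq {set 'I_n}) r : sorted ltn (cols M r).
Proof.
apply: (subseq_sorted ltn_trans _ (iota_ltn_sorted 0 n)).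
rewrite /cols -val_enum_ord; apply: map_subseq; exact: filter_subseq.
Qed.

Lemma cols_lt n (M : seq {set 'I_n}) r : all (fun j => j < n) (cols M r).
Proof. by apply/allP => j /mapP[i _ ->]; exact: ltn_ord. Qed.

Lemma size_cols n (M : seq {set 'I_n}) r : size (cols M r) = #|nth set0 M r.-1|.
Proof.
rewrite /cols size_map size_filter cardE /enum_mem size_filter.
rewrite (eq_filter (a2 := predT)) // filter_predT; apply: eq_count => x.
by rewrite /ball.
Qed.

Lemma nth_conj lam i : i < head 0 lam -> nth 0 (conj_part lam) i = count (fun x => i.+1 <= x) lam.
Proof.
move=> Hi; rewrite /conj_part (nth_map 0) ?size_iota // nth_iota //.
Qed.

Theorem theorem3p17 (lam : seq nat) (n : nat) (M : seq {set 'I_n}) :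
  is_partition lam -> size lam <= n -> in_MLQ lam M ->
  maj M = charge (cw M).
Proof.
move=> _ _ /andP[/eqP Hs Hall].
rewrite /maj majrec_eq /charge cw_eq.
apply: (@main n (size M + size (Wd n (size M) (cols M)))) => //.
- exact: cols_sorted.
- exact: cols_lt.
- move=> r /andP[Hr0 HrL]; rewrite !size_cols /=.
  have E1 := @all2_nth _ _ _ _ _ set0 0 r Hall HrL.
  have Hr1 : r.-1 < size M by apply: leq_ltn_trans HrL; exact: leq_pred.
  have E2 := @all2_nth _ _ _ _ _ set0 0 r.-1 Hall Hr1.
  move: E1 E2 => /eqP -> /eqP ->.
  rewrite !nth_conj -?Hs //.
  rewrite prednK //; apply: sub_count => x /=; exact: ltnW.
Qed.
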